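(* Let $\mathbf{T},\hat{\mathbf{T}}\in\mathbb{R}^{N\times N}$ be symmetric (the true and perturbed covariance wavelet operators), let $h_0,\dots,h_{J-1}$ be wavelet functions, let $\Delta\ge0$ satisfy $\|\mathbf{H}_j(\hat{\mathbf{T}})-\mathbf{H}_j(\mathbf{T})\|\le\Delta$ for all $j$, and let $B>0$ satisfy $\|\mathbf{H}_j(\mathbf{T})\|\le B$ and $\|\mathbf{H}_j(\hat{\mathbf{T}})\|\le B$ for all $j$. Let $\mathbf{x}_{(j_\ell,\dots,j_1)}$ and $\hat{\mathbf{x}}_{(j_\ell,\dots,j_1)}$ be the scattering features of $\mathbf{x}\in\mathbb{R}^N$ computed on $\mathbf{T}$ and $\hat{\mathbf{T}}$ respectively. Then for every $\ell\ge1$ and every tuple $(j_\ell,\dots,j_1)\in\{0,\dots,J-1\}^\ell$, $$\|\hat{\mathbf{x}}_{(j_\ell,\dots,j_1)}-\mathbf{x}_{(j_\ell,\dots,j_1)}\|\le\ell\,\Delta\,B^{\ell-1}\|\mathbf{x}\|.$$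
   Context: For a symmetric $\mathbf{M}=\mathbf{V}\boldsymbol\Lambda\mathbf{V}^\top$ with eigenvalues $\lambda_1,\dots,\lambda_N$, $\mathbf{H}_j(\mathbf{M})=\mathbf{V}\operatorname{diag}(h_j(\lambda_1),\dots,h_j(\lambda_N))\mathbf{V}^\top$. The nonlinearity $\rho:\mathbb{R}\to\mathbb{R}$ acts entrywise and is non-expansive: $|\rho(a)-\rho(b)|\le|a-b|$ and $\rho(0)=0$ (e.g. $\rho=|\cdot|$). Scattering features on $\mathbf{M}$: $\mathbf{x}_{()}=\mathbf{x}$ and $\mathbf{x}_{(j_\ell,\dots,j_1)}=\rho(\mathbf{H}_{j_\ell}(\mathbf{M})\mathbf{x}_{(j_{\ell-1},\dots,j_1)})$. Norms are Euclidean for vectors and spectral for matrices. *)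

(* Defs.v *)
From HB Require Import structures.
From mathcomp Require Import all_boot all_order all_algebra.
From mathcomp Require Import boolp classical_sets reals.
Set Implicit Arguments. Unset Strict Implicit. Unset Printing Implicit Defensive.
Import Order.TTheory GRing.Theory Num.Theory.
Local Open Scope ring_scope.
Local Open Scope classical_set_scope.

Definition vnorm (R : realType) (N : nat) (v : 'cV[R]_N) : R :=
  Num.sqrt (\sum_(i < N) v i 0 ^+ 2).

Definition specnorm (R : realType) (N : nat) (A : 'M[R]_N) : R :=
  sup [set vnorm (A *m v) | v in [set v : 'cV[R]_N | vnorm v <= 1]].

(* Spectral functional calculus: given a decomposition M = V diag(lam) V^T
   with V orthogonal, h(M) = V diag(h(lam_1),...,h(lam_N)) V^T. *)
Definition spec_fun (R : realType) (N : nat) (V : 'M[R]_N) (lam : 'rV[R]_N)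
  (h : R -> R) : 'M[R]_N :=
  V *m diag_mx (map_mx h lam) *m V^T.

(* Scattering feature along a path js = [:: j_l; ...; j_1] (head = last applied). *)
Fixpoint scat (R : realType) (N J : nat) (H : 'I_J -> 'M[R]_N) (rho : R -> R)
  (x : 'cV[R]_N) (js : seq 'I_J) : 'cV[R]_N :=
  match js with
  | [::] => x
  | j :: js' => map_mx rho (H j *m scat H rho x js')
  end.

(* Main.v *)
Require Import Defs.
From HB Require Import structures.
From mathcomp Require Import all_boot all_order all_algebra.
From mathcomp Require Import boolp classical_sets reals.
From mathcomp Require Import ring lra.
Import Order.TTheory GRing.Theory Num.Theory.
Local Open Scope ring_scope.

Section Helpers.
Variable R : realType.
Local Open Scope classical_set_scope.

Lemma CS (n : nat) (a b : 'I_n -> R) :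
  (\sum_i a i * b i) ^+ 2 <= (\sum_i a i ^+ 2) * (\sum_i b i ^+ 2).
Proof.
set A := \sum_i a i ^+ 2; set Bq := \sum_i b i ^+ 2; set C := \sum_i a i * b i.
have A0 : 0 <= A by apply: sumr_ge0 => i _; exact: sqr_ge0.
have B0 : 0 <= Bq by apply: sumr_ge0 => i _; exact: sqr_ge0.
case: (eqVneq A 0) => [Az|Anz].
  have ai : forall i, a i = 0.
    move=> i; apply/eqP; rewrite -sqrf_eq0; apply/eqP.
    by apply: (psumr_eq0P (P := predT) (F := fun i => a i ^+ 2)) => // j _; exact: sqr_ge0.
  have -> : C = 0 by rewrite /C big1 // => i _; rewrite ai mul0r.
  by rewrite expr0n /= mulr_ge0.
have Ap : 0 < A by rewrite lt_def Anz A0.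
have E : \sum_i (A * b i - C * a i) ^+ 2 = A * (A * Bq - C ^+ 2).
  rewrite (eq_bigr (fun i => A ^+ 2 * b i ^+ 2 - (2 * A * C) * (a i * b i) + C ^+ 2 * a i ^+ 2)); last first.
  move=> i _. ring.
  
  rewrite big_split /= sumrB -!mulr_sumr -/A -/Bq -/C; ring.
have : 0 <= A * (A * Bq - C ^+ 2) by rewrite -E; apply: sumr_ge0 => i _; exact: sqr_ge0.
by rewrite pmulr_rge0 // subr_ge0.
Qed.

Lemma vnorm_ge0 (n : nat) (v : 'cV[R]_n) : 0 <= vnorm v.
Proof. exact: sqrtr_ge0. Qed.

Lemma vnorm_sq (n : nat) (v : 'cV[R]_n) : vnorm v ^+ 2 = \sum_i v i 0 ^+ 2.
Proof. by rewrite /vnorm sqr_sqrtr //; apply: sumr_ge0 => i _; exact: sqr_ge0. Qed.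

Lemma vnorm_le (n : nat) (u w : 'cV[R]_n) :
  \sum_i u i 0 ^+ 2 <= \sum_i w i 0 ^+ 2 -> vnorm u <= vnorm w.
Proof. by move=> H; rewrite /vnorm ler_sqrt //; apply: sumr_ge0 => i _; exact: sqr_ge0. Qed.


Lemma vnorm_le_sq (n : nat) (u : 'cV[R]_n) (c : R) : 0 <= c ->
  \sum_i u i 0 ^+ 2 <= c ^+ 2 -> vnorm u <= c.
Proof.
move=> c0 H; rewrite -(ger0_norm c0) -sqrtr_sqr /vnorm ler_sqrt //; exact: sqr_ge0.
Qed.

Lemma vnormZ (n : nat) (a : R) (v : 'cV[R]_n) : vnorm (a *: v) = `|a| * vnorm v.
Proof.
rewrite /vnorm (eq_bigr (fun i => a ^+ 2 * v i 0 ^+ 2)); last by move=> i _; rewrite mxE exprMn.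
by rewrite -mulr_sumr sqrtrM ?sqr_ge0 // sqrtr_sqr.
Qed.

Lemma vnorm_triangle (n : nat) (u w : 'cV[R]_n) : vnorm (u + w) <= vnorm u + vnorm w.
Proof.
apply: vnorm_le_sq; first by rewrite addr_ge0 // vnorm_ge0.
set C := \sum_i u i 0 * w i 0.
have CS' := @CS n (fun i => u i 0) (fun i => w i 0).
rewrite -!vnorm_sq -/C in CS'.
have HC : C <= vnorm u * vnorm w.
  have p0 : 0 <= vnorm u * vnorm w by rewrite mulr_ge0 // vnorm_ge0.
  rewrite -exprMn in CS'; nra.
rewrite (eq_bigr (fun i => u i 0 ^+ 2 + 2 * (u i 0 * w i 0) + w i 0 ^+ 2)); last by move=> i _; rewrite mxE; ring.
rewrite !big_split /= -mulr_sumr -/C -!vnorm_sq; nra.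
Qed.


Lemma sqrt_of_sq (x : R) : 0 <= x -> Num.sqrt (x ^+ 2) = x.
Proof. by move=> x0; rewrite sqrtr_sqr ger0_norm. Qed.

Lemma mul_bound (n : nat) (A : 'M[R]_n) (v : 'cV[R]_n) :
  vnorm (A *m v) ^+ 2 <= (\sum_i \sum_k A i k ^+ 2) * vnorm v ^+ 2.
Proof.
rewrite vnorm_sq mulr_suml; apply: ler_sum => i _.
by rewrite mxE vnorm_sq; apply: (@CS n (fun k => A i k) (fun k => v k 0)).
Qed.

Lemma vnorm_eq0 (n : nat) (v : 'cV[R]_n) : vnorm v = 0 -> v = 0.
Proof.
move=> H; have : vnorm v ^+ 2 = 0 by rewrite H expr0n.
rewrite vnorm_sq => H2; apply/matrixP => i j; rewrite ord1 mxE.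
apply/eqP; rewrite -sqrf_eq0; apply/eqP.
by apply: (psumr_eq0P (P := predT) (F := fun i => v i 0 ^+ 2)) => // k _; exact: sqr_ge0.
Qed.

Lemma specnorm_bound (n : nat) (A : 'M[R]_n) (v : 'cV[R]_n) :
  vnorm (A *m v) <= specnorm A * vnorm v.
Proof.
rewrite /specnorm; set S := [set _ | _ in _].
have hS : has_sup S.
  split; first by exists (vnorm (A *m 0)); exists 0 => //; rewrite /= /vnorm big1 ?sqrtr0 // => i _; rewrite mxE expr0n.
  exists (Num.sqrt (\sum_i \sum_k A i k ^+ 2)) => y [w /= hw <-].
  rewrite -(sqrt_of_sq _ (@vnorm_ge0 n (A *m w))) ler_sqrt; last first.
    by apply: sumr_ge0 => i _; apply: sumr_ge0 => k _; exact: sqr_ge0.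
  apply: le_trans (@mul_bound n A w) _.
  rewrite ler_piMr //; first by apply: sumr_ge0 => i _; apply: sumr_ge0 => k _; exact: sqr_ge0.
  by rewrite expr_le1 // vnorm_ge0.
case: (eqVneq (vnorm v) 0) => [/vnorm_eq0 ->|nz].
  by rewrite mulmx0 /vnorm big1 ?sqrtr0 ?mulr0 // => i _; rewrite mxE expr0n.
have np : 0 < vnorm v by rewrite lt_def nz vnorm_ge0.
set w := (vnorm v)^-1 *: v.
have hv : v = vnorm v *: w by rewrite /w scalerA mulfV // scale1r.
have hw : vnorm w = 1 by rewrite /w vnormZ ger0_norm ?invr_ge0 ?vnorm_ge0 // mulVf.
have : S (vnorm (A *m w)) by exists w => //=; rewrite hw.
move/(sup_upper_bound hS) => Hle.
rewrite {1}hv -scalemxAr vnormZ ger0_norm ?vnorm_ge0 // mulrC.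
by rewrite ler_wpM2r // vnorm_ge0.
Qed.

Lemma rho_diff (n : nat) (rho : R -> R) (u w : 'cV[R]_n) :
  (forall a b, `|rho a - rho b| <= `|a - b|) ->
  vnorm (map_mx rho u - map_mx rho w) <= vnorm (u - w).
Proof.
move=> Hr; apply: vnorm_le; apply: ler_sum => i _; rewrite !mxE.
rewrite -real_normK ?num_real // -[X in _ <= X]real_normK ?num_real //.
by rewrite lerXn2r ?nnegrE ?normr_ge0.
Qed.

Lemma rho_norm (n : nat) (rho : R -> R) (u : 'cV[R]_n) :
  (forall a b, `|rho a - rho b| <= `|a - b|) -> rho 0 = 0 ->
  vnorm (map_mx rho u) <= vnorm u.
Proof.
move=> Hr H0; have := @rho_diff n rho u 0 Hr.
have -> : map_mx rho (0 : 'cV[R]_n) = 0 by apply/matrixP => i j; rewrite !mxE H0.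
by rewrite !subr0.
Qed.


Arguments vnorm_ge0 {n}.
Arguments specnorm_bound {n}.
Arguments vnorm_triangle {n}.
Arguments rho_norm {n rho}.
Arguments rho_diff {n rho}.
Lemma vnorm0 (n : nat) : vnorm (0 : 'cV[R]_n) = 0.
Proof. by rewrite /vnorm big1 ?sqrtr0 // => i _; rewrite mxE expr0n. Qed.

Lemma scat_bounds (n J : nat) (H Hh : 'I_J -> 'M[R]_n) (rho : R -> R)
  (Delta B : R) (x : 'cV[R]_n) (js : seq 'I_J) :
  (forall a b, `|rho a - rho b| <= `|a - b|) -> rho 0 = 0 ->
  0 <= Delta -> (forall j, specnorm (Hh j - H j) <= Delta) -> 0 < B ->
  (forall j, specnorm (H j) <= B) -> (forall j, specnorm (Hh j) <= B) ->
  vnorm (scat H rho x js) <= B ^+ size js * vnorm x /\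
  vnorm (scat Hh rho x js - scat H rho x js)
    <= (size js)%:R * Delta * B ^+ (size js).-1 * vnorm x.
Proof.
move=> Hr H0 D0 HD B0 HB HBh.
elim: js => [|j js [IH1 IH2]] /=.
  by rewrite expr0 mul1r subrr vnorm0 !mul0r.
set s := scat H rho x js; set sh := scat Hh rho x js.
set l := size js in IH1 IH2 *.
have x0 := vnorm_ge0 x.
have s0 := vnorm_ge0 s.
have d0 := vnorm_ge0 (sh - s).
split.
  apply: le_trans (rho_norm _ Hr H0) _.
  apply: le_trans (specnorm_bound _ _) _.
  apply: le_trans (_ : B * vnorm s <= _); first by rewrite ler_wpM2r.
  by rewrite exprS -mulrA ler_wpM2l // ltW.
apply: le_trans (rho_diff _ _ Hr) _.
have E : Hh j *m sh - H j *m s = Hh j *m (sh - s) + (Hh j - H j) *m s.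
  by rewrite mulmxBr mulmxBl addrA subrK.
rewrite E; apply: le_trans (vnorm_triangle _ _) _.
have T1 : vnorm (Hh j *m (sh - s)) <= B * vnorm (sh - s).
  by apply: le_trans (specnorm_bound _ _) _; rewrite ler_wpM2r.
have T2 : vnorm ((Hh j - H j) *m s) <= Delta * vnorm s.
  by apply: le_trans (specnorm_bound _ _) _; rewrite ler_wpM2r.
have T3 : B * vnorm (sh - s) <= B * (l%:R * Delta * B ^+ l.-1 * vnorm x).
  by rewrite ler_wpM2l // ltW.
have T4 : Delta * vnorm s <= Delta * (B ^+ l * vnorm x) by rewrite ler_wpM2l.
have K : B * (l%:R * Delta * B ^+ l.-1 * vnorm x) = l%:R * Delta * B ^+ l * vnorm x.
  clear; case: l => [|l] /=; first by rewrite !mul0r mulr0.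
  by rewrite exprS; ring.
rewrite K in T3.
have -> : (l.+1)%:R * Delta * B ^+ l * vnorm x = l%:R * Delta * B ^+ l * vnorm x + Delta * (B ^+ l * vnorm x).
  by rewrite -addn1 natrD; ring.
lra.
Qed.

End Helpers.

Theorem lemma3 (R : realType) (N J : nat)
  (T Th V Vh : 'M[R]_N) (lam lamh : 'rV[R]_N)
  (h : 'I_J -> R -> R) (rho : R -> R) (Delta B : R) (x : 'cV[R]_N)
  (js : seq 'I_J) :
  T^T = T -> Th^T = Th ->
  V *m V^T = 1%:M -> V^T *m V = 1%:M -> T = V *m diag_mx lam *m V^T ->
  Vh *m Vh^T = 1%:M -> Vh^T *m Vh = 1%:M -> Th = Vh *m diag_mx lamh *m Vh^T ->
  (forall a b, `|rho a - rho b| <= `|a - b|) -> rho 0 = 0 ->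
  0 <= Delta ->
  (forall j, specnorm (spec_fun Vh lamh (h j) - spec_fun V lam (h j)) <= Delta) ->
  0 < B ->
  (forall j, specnorm (spec_fun V lam (h j)) <= B) ->
  (forall j, specnorm (spec_fun Vh lamh (h j)) <= B) ->
  (1 <= size js)%N ->
  vnorm (scat (fun j => spec_fun Vh lamh (h j)) rho x js
         - scat (fun j => spec_fun V lam (h j)) rho x js)
  <= (size js)%:R * Delta * B ^+ (size js).-1 * vnorm x.
Proof.
move=> _ _ _ _ _ _ _ _ Hr H0 D0 HD B0 HB HBh _.
by case: (@scat_bounds R N J _ _ rho Delta B x js Hr H0 D0 HD B0 HB HBh).
Qed.
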